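(* Let $l$ be a positive integer and let $G_l$ be the graph obtained by identifying a vertex of the complete graph $K_{l+2}$ with a vertex of the Cartesian product $P_{l+1}\times P_2$. Then $k(G_l)=1$ and $p(G_l)=l$.
   Context: All graphs are finite and simple. $P_n$ is the path on $n$ vertices; the Cartesian product $G_1\times G_2$ has vertex set $V(G_1)\times V(G_2)$, with $(u_1,u_2)$ adjacent to $(v_1,v_2)$ iff either $u_1=v_1$ and $u_2v_2\in E(G_2)$, or $u_2=v_2$ and $u_1v_1\in E(G_1)$. For an acyclic digraph $D$, the competition graph $C(D)$ is the graph on $V(D)$ in which distinct $u,v$ are adjacent iff they have a common out-neighbor in $D$. The competition number $k(G)$ is the smallest $k\ge 0$ such that $G$ together with $k$ new isolated vertices is the competition graph of some acyclic digraph. The phylogeny graph $P(D)$ of an acyclic digraph $D$ is the graph on $V(D)$ in which distinct vertices $u,v$ are adjacent iff $(u,v)\in A(D)$, or $(v,u)\in A(D)$, or they have a common out-neighbor in $D$. A phylogeny digraph for a graph $G$ is an acyclic digraph $D$ such that $G$ is an induced subgraph of $P(D)$ and $D$ has no arc from a vertex of $V(D)\setminus V(G)$ to a vertex of $V(G)$. The phylogeny number $p(G)$ is the minimum of $|V(D)\setminus V(G)|$ over all phylogeny digraphs $D$ for $G$. *)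

(* Defs.v *)
(* Simple graphs = symmetric irreflexive boolean relations on a finType. *)
From mathcomp Require Import all_boot.
Set Implicit Arguments. Unset Strict Implicit. Unset Printing Implicit Defensive.

Definition path_graph (n : nat) : rel 'I_n :=
  fun i j => (i.+1 == j :> nat) || (j.+1 == i :> nat).

Definition complete_graph (n : nat) : rel 'I_n := fun i j => i != j.

Definition cart_prod (T1 T2 : finType) (e1 : rel T1) (e2 : rel T2) : rel (T1 * T2) :=
  fun u v => ((u.1 == v.1) && e2 u.2 v.2) || ((u.2 == v.2) && e1 u.1 v.1).

(* Identification of vertex a of G1 with vertex b of G2.
   Vertex set: V(G2) + (V(G1) \ {a}); the identified vertex is represented by inl b. *)
Definition glue_vtx (T1 T2 : finType) (a : T1) : finType :=
  (T2 + {x : T1 | x != a})%type.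

Definition glue (T1 T2 : finType) (e1 : rel T1) (a : T1) (e2 : rel T2) (b : T2)
  : rel (@glue_vtx T1 T2 a) :=
  fun u v =>
    match u, v with
    | inl y, inl y' => e2 y y'
    | inr x, inr x' => e1 (val x) (val x')
    | inl y, inr x => (y == b) && e1 a (val x)
    | inr x, inl y => (y == b) && e1 (val x) a
    end.
Arguments glue {T1 T2} e1 a e2 b.

Definition acyclic (V : finType) (D : rel V) : Prop :=
  forall x y, D x y -> ~~ connect D y x.

Definition competition_graph (V : finType) (D : rel V) : rel V :=
  fun u v => (u != v) && [exists w, D u w && D v w].

Definition phylogeny_graph (V : finType) (D : rel V) : rel V :=
  fun u v => (u != v) && [|| D u v, D v u | [exists w, D u w && D v w]].

Definition add_isolated (T : finType) (e : rel T) (k : nat) : rel (T + 'I_k) :=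
  fun u v => match u, v with inl x, inl y => e x y | _, _ => false end.

Definition comp_ok (T : finType) (e : rel T) (k : nat) : Prop :=
  exists D : rel (T + 'I_k), acyclic D /\
    forall u v, competition_graph D u v = @add_isolated T e k u v.

Definition competition_number_is (T : finType) (e : rel T) (kk : nat) : Prop :=
  comp_ok e kk /\ forall k, comp_ok e k -> kk <= k.

(* a phylogeny digraph for G with exactly k vertices outside V(G)
   (vertex set V(G) + 'I_k, every finite digraph containing V(G) is of this form up to iso) *)
Definition phylo_ok (T : finType) (e : rel T) (k : nat) : Prop :=
  exists D : rel (T + 'I_k), acyclic D /\
    (forall x y : T, phylogeny_graph D (inl x) (inl y) = e x y) /\
    (forall (i : 'I_k) (x : T), ~~ D (inr i) (inl x)).

Definition phylogeny_number_is (T : finType) (e : rel T) (pp : nat) : Prop :=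
  phylo_ok e pp /\ forall k, phylo_ok e k -> pp <= k.

Definition G_l (l : nat) (a : 'I_(l + 2)) (b : 'I_(l + 1) * 'I_2) :=
  glue (@complete_graph (l + 2)) a (cart_prod (@path_graph (l + 1)) (@path_graph 2)) b.
Arguments G_l l a b : clear implicits.

(* Main.v *)
Require Import Defs.
From mathcomp Require Import all_boot zify.
Set Implicit Arguments. Unset Strict Implicit. Unset Printing Implicit Defensive.

Lemma reach_lt (V : finType) (D : rel V) : acyclic D ->
  forall x y, D x y -> #|[pred z | connect D y z]| < #|[pred z | connect D x z]|.
Proof.
move=> ac x y Dxy; apply: proper_card; apply/properP; split.
  apply/subsetP => z; rewrite !inE => Hz; exact: connect_trans (connect1 Dxy) Hz.
exists x; rewrite !inE ?connect0 //; exact: ac.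
Qed.

Lemma no_loop (V : finType) (D : rel V) : acyclic D -> forall x, ~~ D x x.
Proof. by move=> ac x; apply/negP => Dx; move: (ac _ _ Dx); rewrite connect0. Qed.

Lemma sink_exists (V : finType) (D : rel V) (x0 : V) : acyclic D ->
  exists x, forall y, ~~ D x y.
Proof.
move=> ac.
pose x := [arg min_(x < x0) #|[pred z | connect D x z]|].
exists x; move=> y; apply/negP => Dxy.
rewrite /x in Dxy.
case: arg_minnP Dxy => // m _ Hm Dmy.
have := reach_lt ac Dmy; move=> Hlt; move: (Hm y isT); rewrite leqNgt => /negP; apply; exact: Hlt.
Qed.

Lemma pot_acyclic (V : finType) (D : rel V) (phi : V -> nat) :
  (forall x y, D x y -> phi x < phi y) -> acyclic D.
Proof.
move=> H x y Dxy; apply/negP => /connectP [p pth Ex].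
have : phi y <= phi (last y p).
  elim: p y pth {Dxy Ex} => //= z p IH y /andP [Dyz pth].
  have := H _ _ Dyz; have := IH _ pth; lia.
rewrite -Ex; have := H _ _ Dxy; lia.
Qed.

Lemma phyl_sym (V : finType) (D : rel V) u v :
  phylogeny_graph D u v = phylogeny_graph D v u.
Proof.
rewrite /phylogeny_graph eq_sym; congr (_ && _).
rewrite orbA [D u v || _]orbC -orbA; congr (_ || (_ || _)).
by apply: eq_existsb => w; rewrite andbC.
Qed.

Lemma phylo_lb (T : finType) (e : rel T) k (I : finType) (E : I -> T * T)
  (P : pred T) (i0 : I) :
  phylo_ok e k ->
  (forall i, e (E i).1 (E i).2) ->
  (forall i x, ~~ (e x (E i).1 && e x (E i).2)) ->
  (forall i, P (E i).1 && P (E i).2) ->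
  (forall i j, E j = E i \/ E j = ((E i).2, (E i).1) -> i = j) ->
  #|I| < #|P| + k.
Proof.
case=> D [ac [ph nonew]] Ee Etri EP Einj.
have esym : forall x y, e x y = e y x by move=> x y; rewrite -!ph phyl_sym.
have ene : forall x y, e x y -> x != y.
  by move=> x y; rewrite -ph => /andP [].
pose r x := #|[pred z | connect D (inl x) z]|.
have P0 : P (E i0).1 by case/andP: (EP i0).
pose w := [arg max_(w > (E i0).1 in P) r w].
have [Pw maxw] : P w /\ forall y, P y -> r y <= r w.
  by rewrite /w; case: arg_maxnP => // m Pm Hm; split.
have nw : forall u, P u -> ~~ D (inl u) (inl w).
  move=> u Pu; apply/negP => Duw; have := reach_lt ac Duw.
  move=> Hlt; move: (maxw _ Pu); rewrite leqNgt => /negP; apply; exact: Hlt.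
pose W i : T + 'I_k :=
  let u := (E i).1 in let v := (E i).2 in
  if D (inl u) (inl v) then inl v else if D (inl v) (inl u) then inl u
  else odflt (inl u) [pick z | D (inl u) z && D (inl v) z].
have inN : forall i, ((inl (E i).1 == W i) || D (inl (E i).1) (W i)) &&
                     ((inl (E i).2 == W i) || D (inl (E i).2) (W i)).
  move=> i; rewrite /W.
  case: ifP => [-> | Duv]; first by rewrite eqxx orbT.
  case: ifP => [-> | Dvu]; first by rewrite eqxx orbT.
  case: pickP => [z /andP [-> ->] | none]; first by rewrite !orbT.
  have := Ee i; rewrite -ph => /andP [_].
  by rewrite /= Duv Dvu /= => /existsP [z]; rewrite none.
have adj : forall x y c, x != y -> (inl x == c) || D (inl x) c ->
    (inl y == c) || D (inl y) c -> e x y.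
  move=> x y c nxy hx hy; rewrite -ph /phylogeny_graph /= nxy /=.
  case/orP: hx => [/eqP Ec | hx]; case/orP: hy => [/eqP Ec' | hy].
  - by move: Ec; rewrite -Ec' => -[] Exy; rewrite Exy eqxx in nxy.
  - by subst c; rewrite hy orbT.
  - by subst c; rewrite hx.
  by apply/orP; right; apply/orP; right; apply/existsP; exists c; rewrite hx hy.
have Wok : forall i t, W i = inl t -> P t && (t != w).
  move=> i t; rewrite /W.
  case: ifP => [Duv' [<-] | Duv].
    case/andP: (EP i) => Pu ->; apply/eqP => Ew; move: Duv'; rewrite Ew.
    by rewrite (negbTE (nw _ Pu)).
  case: ifP => [Dvu' [<-] | Dvu].
    case/andP: (EP i) => -> Pv; apply/eqP => Ew; move: Dvu'; rewrite Ew.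
    by rewrite (negbTE (nw _ Pv)).
  case: pickP => [z /andP [Du Dv] /= Ez | none].
    subst z.
    have h1 : e t (E i).1.
      rewrite esym; apply: (adj _ _ (inl t)) => //; last by rewrite eqxx.
      by apply/eqP => E1; move: Du; rewrite E1 (negbTE (no_loop ac _)).
      by rewrite Du orbT.
    have h2 : e t (E i).2.
      rewrite esym; apply: (adj _ _ (inl t)) => //; last by rewrite eqxx.
      by apply/eqP => E1; move: Dv; rewrite E1 (negbTE (no_loop ac _)).
      by rewrite Dv orbT.
    by have := Etri i t; rewrite h1 h2.
  have := Ee i; rewrite -ph => /andP [_].
  by rewrite /= Duv Dvu /= => /existsP [z]; rewrite none.
have memb : forall i x, (inl x == W i) || D (inl x) (W i) ->
    (x == (E i).1) || (x == (E i).2).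
  move=> i x hx; case/andP: (inN i) => hu hv.
  apply/negPn/negP; rewrite negb_or => /andP [n1 n2].
  by have := Etri i x; rewrite (adj _ _ _ n1 hx hu) (adj _ _ _ n2 hx hv).
have Winj : injective W.
  move=> i j Eij.
  case/andP: (inN j); rewrite -Eij => hu hv.
  have m1 := memb _ _ hu; have m2 := memb _ _ hv.
  have nj := ene _ _ (Ee j).
  apply: Einj; move: m1 m2 nj.
  case: (E i) => u v; case: (E j) => u' v' /=.
  case/orP => /eqP ->; case/orP => /eqP -> //; rewrite ?eqxx //; by [left | right].
pose S := [set t | P t && (t != w)].
have cardA : #|W @: [set: I]| = #|I| by rewrite (card_imset _ Winj) cardsT.
have dis : W @: [set: I] :&: (@inl T 'I_k @: ~: S) = set0.
  apply/setP => z; rewrite !inE; apply/negP => /andP [/imsetP [i _ ->] /imsetP [t]].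
  rewrite !inE => nS Ewt; have := Wok _ _ Ewt; by rewrite (negbTE nS).
have cardC : #|@inl T 'I_k @: ~: S| = #|~: S|
  by rewrite card_imset //; exact: inl_inj.
have cS := cardsC S.
have cS2 : #|S| = #|[predD1 P & w]| by apply: eq_card => t; rewrite !inE andbC.
have Pw' : w \in P := Pw.
have cP := cardD1 w P; rewrite Pw' in cP.
have U := cardsUI (W @: [set: I]) (@inl T 'I_k @: ~: S).
rewrite dis cards0 in U.
have M := max_card (W @: [set: I] :|: (@inl T 'I_k @: ~: S)).
rewrite card_sum card_ord in M.
lia.
Qed.
Lemma comp_lb (T : finType) (e : rel T) (x0 : T) :
  (forall x, exists y, e x y) -> forall k, comp_ok e k -> 0 < k.
Proof.
move=> hn [|k] // [D [ac H]].
have [s hs] := sink_exists (inl x0) ac.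
case: s hs => [x|[i hi]] hs; last by [].
have [y exy] := hn x; move: (H (inl x) (inl y)).
rewrite /add_isolated exy /competition_graph => /andP [_ /existsP [w /andP [Dxw _]]].
by rewrite (negbTE (hs w)) in Dxw.
Qed.

Definition LV l := ('I_(l+1) * 'I_2)%type.
Definition CV l (a : 'I_(l+2)) := {x : 'I_(l+2) | x != a}.
Definition cv l (a : 'I_(l+2)) (x : CV a) : nat := val (val x).

Lemma cv_lt l (a : 'I_(l+2)) (x : CV a) : cv x < l + 2.
Proof. exact: ltn_ord. Qed.
Lemma cv_na l (a : 'I_(l+2)) (x : CV a) : cv x != a.
Proof. by case: x => [x hx]; rewrite /cv /= val_eqE. Qed.
Lemma cv_eq l (a : 'I_(l+2)) (x y : CV a) : (x == y) = (cv x == cv y).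
Proof. by rewrite /cv !val_eqE. Qed.

Lemma Gll l a b (i i' : 'I_(l+1)) (j j' : 'I_2) :
  G_l l a b (inl (i,j)) (inl (i',j')) =
  ((i == i' :> nat) && ((j.+1 == j' :> nat) || (j'.+1 == j :> nat)))
  || ((j == j' :> nat) && ((i.+1 == i' :> nat) || (i'.+1 == i :> nat))).
Proof. by rewrite /G_l /glue /cart_prod /path_graph /= -!val_eqE. Qed.

Lemma Glr l a b (i : 'I_(l+1)) (j : 'I_2) (x : CV a) :
  G_l l a b (inl (i,j)) (inr x) = (i == b.1 :> nat) && (j == b.2 :> nat).
Proof.
rewrite /G_l /glue /complete_graph /=; case: b => b1 b2.
rewrite xpair_eqE -!val_eqE /=; case: x => [x hx] /=; move: hx; rewrite eq_sym => hx; by rewrite hx andbT.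
Qed.

Lemma Grl l a b (i : 'I_(l+1)) (j : 'I_2) (x : CV a) :
  G_l l a b (inr x) (inl (i,j)) = (i == b.1 :> nat) && (j == b.2 :> nat).
Proof.
rewrite /G_l /glue /complete_graph /=; case: b => b1 b2.
rewrite xpair_eqE -!val_eqE /=; case: x => [x hx] /=; by rewrite hx andbT.
Qed.

Lemma Grr l a b (x y : CV a) :
  G_l l a b (inr x) (inr y) = (cv x != cv y).
Proof. by rewrite /G_l /glue /complete_graph /= -!val_eqE. Qed.

Lemma eq_inl (A B : eqType) (x y : A) : (@inl A B x == inl y) = (x == y).
Proof. by apply/eqP/eqP => [[]|->]. Qed.

Lemma eq_inr (A B : eqType) (x y : B) : (@inr A B x == inr y) = (x == y).
Proof. by apply/eqP/eqP => [[]|->]. Qed.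

Lemma eq_ll l (a : 'I_(l+2)) (i i' : 'I_(l+1)) (j j' : 'I_2) :
  ((inl (i,j) : glue_vtx (LV l) a) == inl (i',j')) = (i == i' :> nat) && (j == j' :> nat).
Proof.
apply/idP/idP => [/eqP [-> ->]|/andP [/eqP h1 /eqP h2]]; rewrite ?eqxx //.
by apply/eqP; congr (inl (_,_)); apply: val_inj.
Qed.

Lemma eq_rr l (a : 'I_(l+2)) (x y : CV a) :
  ((inr x : glue_vtx (LV l) a) == inr y) = (cv x == cv y).
Proof. by rewrite -cv_eq. Qed.

Definition rk l (a : 'I_(l+2)) (x : CV a) : nat :=
  if cv x < a then cv x else (cv x).-1.

Lemma rk_le l (a : 'I_(l+2)) (x : CV a) : rk x <= l.
Proof. rewrite /rk; have := cv_lt x; have := cv_na x; have := ltn_ord a; case: ifP; lia. Qed.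

Definition unrkv l (a : 'I_(l+2)) (r : nat) : nat := if r < a then r else r.+1.

Lemma unrk_lt l (a : 'I_(l+2)) r : r <= l -> unrkv a r < l + 2.
Proof. rewrite /unrkv; case: ifP; lia. Qed.

Lemma unrk_na l (a : 'I_(l+2)) r (h : r <= l) : Ordinal (@unrk_lt l a r h) != a.
Proof. rewrite -val_eqE /= /unrkv; case: ifP; lia. Qed.

Definition unrk l (a : 'I_(l+2)) r (h : r <= l) : CV a :=
  exist _ (Ordinal (@unrk_lt l a r h)) (@unrk_na l a r h).

Lemma cv_unrk l (a : 'I_(l+2)) r (h : r <= l) : cv (unrk a h) = unrkv a r.
Proof. by []. Qed.

Lemma rk_unrk l (a : 'I_(l+2)) r (h : r <= l) : rk (unrk a h) = r.
Proof.
rewrite /rk cv_unrk /unrkv; case H: (r < a) => /=; first by rewrite H.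
by case H2: (r.+1 < a); lia.
Qed.

Definition Dc l (a : 'I_(l+2)) (b : LV l) : rel (glue_vtx (LV l) a + 'I_1) :=
  fun p q =>
  match p, q with
  | inl (inl (i0,j0)), inl (inl (i,j)) =>
      if j == 0 :> nat then i0.+1 == i :> nat
      else (j0 == 0 :> nat) && ((i0 == i :> nat) || (i0.+1 == i :> nat))
  | inl (inl (i0,j0)), inl (inr x) =>
      ((i0 == rk x :> nat) && ((j0 == 1 :> nat) || (rk x == l)))
      || ((j0 == 1 :> nat) && (i0 == (rk x).+1 :> nat))
  | inl (inl y), inr _ => y == b
  | inl (inr _), inr _ => true
  | _, _ => false
  end.

Definition phic l (a : 'I_(l+2)) (p : glue_vtx (LV l) a + 'I_1) : nat :=
  match p with
  | inl (inl (i,j)) => 2 * i + j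
  | inl (inr _) => 2 * l + 2
  | inr _ => 2 * l + 3
  end.

Lemma Dc_acyclic l a b : acyclic (@Dc l a b).
Proof.
apply: (@pot_acyclic _ _ (@phic l a)).
move=> [[[i0 j0]|x0]|z0] [[[i j]|x]|z] //=.
- have := ltn_ord j0; have := ltn_ord j; case: ifP; lia.
- have := ltn_ord j0; have := ltn_ord i0; have := rk_le x; lia.
- move=> _; have := ltn_ord j0; have := ltn_ord i0; lia.
- lia.
Qed.

Ltac addb := repeat match goal with
 | x : _ |- _ => lazymatch goal with
     | _ : is_true (nat_of_ord x < _) |- _ => fail
     | _ => have := ltn_ord x; move=> ? end
 | |- context [rk ?x] => lazymatch goal with
     | _ : is_true (rk x <= _) |- _ => fail
     | _ => have := rk_le x; move=> ? end
 end.

Lemma Dc_comp_l l a (b1 : 'I_(l+1)) (b2 : 'I_2) (u v : glue_vtx (LV l) a) :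
  (u != v) && [exists w, Dc (b1,b2) (inl u) w && Dc (b1,b2) (inl v) w] ->
  G_l l a (b1,b2) u v.
Proof.
case/andP => neq /existsP [w /andP [Du Dv]].
move: neq Du Dv; case: u => [[i0 j0]|x0]; case: v => [[i1 j1]|x1];
  case: w => [[[i j]|x]|z] //;
  rewrite ?Gll ?Glr ?Grl ?Grr /= ?eq_inl ?eq_ll ?eq_rr ?xpair_eqE -?val_eqE /=; addb; try lia.
case: ifP => ?; lia.
Qed.

Lemma Dc_comp_r l a (b1 : 'I_(l+1)) (b2 : 'I_2) (u v : glue_vtx (LV l) a) :
  G_l l a (b1,b2) u v ->
  (u != v) && [exists w, Dc (b1,b2) (inl u) w && Dc (b1,b2) (inl v) w].
Proof.
move=> Guv; apply/andP; split.
  apply/negP => /eqP E; subst v; move: Guv; case: u => [[i j]|x];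
  rewrite ?Gll ?Grr /=; lia.
move: Guv; case: u => [[i0 j0]|x0]; case: v => [[i1 j1]|x1];
  rewrite ?Gll ?Glr ?Grl ?Grr /= => H; addb.
- case E: (i0 == i1 :> nat).
  + case: (ltnP i0 l) => hi.
    * have h : i0.+1 < l + 1 by lia.
      apply/existsP; exists (inl (inl (Ordinal h, ord0))); rewrite /=; lia.
    * have h : l <= l by [].
      apply/existsP; exists (inl (inr (unrk a h))); rewrite /= rk_unrk; lia.
  + have hm : minn i0 i1 <= l by lia.
    case E2: (j0 == 0 :> nat).
    * have h : (minn i0 i1).+1 < l + 1 by lia.
      have h1 : 1 < 2 by [].
      apply/existsP; exists (inl (inl (Ordinal h, Ordinal h1))); rewrite /=; lia.
    * apply/existsP; exists (inl (inr (unrk a hm))); rewrite /= rk_unrk; lia.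
- apply/existsP; exists (inr ord0); rewrite /= xpair_eqE -!val_eqE /=; lia.
- apply/existsP; exists (inr ord0); rewrite /= xpair_eqE -!val_eqE /=; lia.
- by apply/existsP; exists (inr ord0).
Qed.

Lemma comp_ok1 l a b : comp_ok (G_l l a b) 1.
Proof.
case: b => b1 b2; exists (Dc (b1,b2)); split; first exact: Dc_acyclic.
move=> [u|z] [v|z']; rewrite /competition_graph /add_isolated.
- by apply/idP/idP; [exact: Dc_comp_l | exact: Dc_comp_r].
- apply/negbTE; rewrite negb_and; apply/orP; right; apply/existsPn => w.
  by apply/negP => /andP [_]; case: w => [[[? ?]|?]|?].
- apply/negbTE; rewrite negb_and; apply/orP; right; apply/existsPn => w.
  by apply/negP => /andP []; case: w => [[[? ?]|?]|?].
- apply/negbTE; rewrite negb_and; apply/orP; right; apply/existsPn => w.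
  by apply/negP => /andP []; case: w => [[[? ?]|?]|?].
Qed.

Lemma G_nbr l a b (x : glue_vtx (LV l) a) : exists y, G_l l a b x y.
Proof.
case: x => [[i j]|x].
- have h : (1 - j) < 2 by lia.
  exists (inl (i, Ordinal h)); rewrite Gll /=; addb; lia.
- case: b => b1 b2; exists (inl (b1, b2)); rewrite Grl /=; lia.
Qed.

Definition Dp l (a : 'I_(l+2)) (b : LV l) : rel (glue_vtx (LV l) a + 'I_l) :=
  fun p q =>
  match p, q with
  | inl (inl (i,j)), inl (inl (i',j')) =>
      (j == 0 :> nat) && (((j' == 0 :> nat) && (i' == i.+1 :> nat))
                          || ((j' == 1 :> nat) && (i' == i :> nat)))
  | inl (inl y), inl (inr _) => y == b
  | inl (inr x), inl (inr y) => cv x < cv y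
  | inl (inl (i,j)), inr k => (j == 1 :> nat) && ((i == k :> nat) || (i == k.+1 :> nat))
  | _, _ => false
  end.

Definition phip l (a : 'I_(l+2)) (p : glue_vtx (LV l) a + 'I_l) : nat :=
  match p with
  | inl (inl (i,j)) => 2 * i + j
  | inl (inr x) => 2 * l + 2 + cv x
  | inr _ => 4 * l + 6
  end.

Lemma Dp_acyclic l a b : acyclic (@Dp l a b).
Proof.
apply: (@pot_acyclic _ _ (@phip l a)).
move=> [[[i0 j0]|x0]|z0] [[[i j]|x]|z] //=; addb; lia.
Qed.

Lemma Dp_phyl l a (b1 : 'I_(l+1)) (b2 : 'I_2) (u v : glue_vtx (LV l) a) :
  phylogeny_graph (Dp (b1,b2)) (inl u) (inl v) = G_l l a (b1,b2) u v.
Proof.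
rewrite /phylogeny_graph /=; apply/idP/idP.
- case/andP => neq /or3P [D1|D2|/existsP [w /andP [Du Dv]]].
  + move: neq D1; case: u => [[i0 j0]|x0]; case: v => [[i1 j1]|x1] //;
    rewrite ?Gll ?Glr ?Grl ?Grr /= ?eq_inl ?eq_ll ?eq_rr ?xpair_eqE -?val_eqE /=; addb; lia.
  + move: neq D2; case: u => [[i0 j0]|x0]; case: v => [[i1 j1]|x1] //;
    rewrite ?Gll ?Glr ?Grl ?Grr /= ?eq_inl ?eq_ll ?eq_rr ?xpair_eqE -?val_eqE /=; addb; lia.
  + move: neq Du Dv; case: u => [[i0 j0]|x0]; case: v => [[i1 j1]|x1];
    case: w => [[[i j]|x]|z] //;
    rewrite ?Gll ?Glr ?Grl ?Grr /= ?eq_inl ?eq_ll ?eq_rr ?xpair_eqE -?val_eqE /=; addb; lia.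
- move=> Guv; rewrite eq_inl; apply/andP; split.
    apply/negP => /eqP E; subst v; move: Guv; case: u => [[i j]|x];
    rewrite ?Gll ?Grr /=; lia.
  move: Guv; case: u => [[i0 j0]|x0]; case: v => [[i1 j1]|x1];
    rewrite ?Gll ?Glr ?Grl ?Grr /= => H; addb.
  + case E: [&& (j0 == 1 :> nat), (j1 == 1 :> nat) & (i0 != i1 :> nat)].
    * have hk : minn i0 i1 < l by lia.
      apply/orP; right; apply/orP; right; apply/existsP; exists (inr (Ordinal hk)).
      rewrite /=; lia.
    * rewrite orbA; apply/orP; left; lia.
  + by apply/orP; left; rewrite xpair_eqE -!val_eqE /=; lia.
  + by apply/orP; left; rewrite xpair_eqE -!val_eqE /=; lia.
  + rewrite orbA; apply/orP; left; lia.
Qed.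

Lemma phylo_okl l a b : phylo_ok (G_l l a b) l.
Proof.
case: b => b1 b2; exists (Dp (b1,b2)); split; first exact: Dp_acyclic.
split; first exact: Dp_phyl.
by move=> i [[? ?]|?].
Qed.

Lemma lo_lt l (i : 'I_l) : (i : nat) < l + 1. Proof. have := ltn_ord i; lia. Qed.
Lemma hi_lt l (i : 'I_l) : (i : nat).+1 < l + 1. Proof. have := ltn_ord i; lia. Qed.

Definition Ed l (a : 'I_(l+2)) (e : ('I_l * 'I_2) + 'I_(l+1)) :
  glue_vtx (LV l) a * glue_vtx (LV l) a :=
  match e with
  | inl (i, j) => (inl (Ordinal (lo_lt i), j), inl (Ordinal (hi_lt i), j))
  | inr i => (inl (i, ord0), inl (i, @Ordinal 2 1 isT))
  end.

Definition isL l (a : 'I_(l+2)) : pred (glue_vtx (LV l) a) :=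
  fun x => if x is inl _ then true else false.

Lemma card_isL l (a : 'I_(l+2)) : #|@isL l a| = (l + 1) * 2.
Proof.
have -> : #|@isL l a| = #|(@inl (LV l) (CV a)) @: [set: LV l]|.
  apply: eq_card => -[y|x]; rewrite /= ?inE /=.
    by apply/esym/imsetP; exists y; rewrite ?inE.
  by apply/esym/imsetP => -[y _].
by rewrite card_imset ?cardsT ?card_prod ?card_ord //; exact: inl_inj.
Qed.

Definition code l (a : 'I_(l+2)) (p : glue_vtx (LV l) a) : nat * nat * nat :=
  match p with inl (i, j) => (0, nat_of_ord i, nat_of_ord j) | inr x => (1, cv x, 0) end.

Lemma phylo_lbl l a b (hl : 0 < l) k : phylo_ok (G_l l a b) k -> l <= k.
Proof.
move=> H.
have h0 : 0 < l + 1 by lia.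
pose i0 : ('I_l * 'I_2) + 'I_(l+1) := inr (Ordinal h0).
have := @phylo_lb _ _ k _ (@Ed l a) (@isL l a) i0 H.
case: b H => b1 b2 H.
have T1 : forall e, G_l l a (b1,b2) (Ed a e).1 (Ed a e).2.
  by move=> [[i j]|i]; rewrite Gll /=; addb; lia.
have T2 : forall e x, ~~ (G_l l a (b1,b2) x (Ed a e).1 && G_l l a (b1,b2) x (Ed a e).2).
  move=> [[i j]|i] [[p q]|x]; rewrite ?Gll ?Grl /=; addb; lia.
have T3 : forall e, (@isL l a) (Ed a e).1
             && (@isL l a) (Ed a e).2.
  by move=> [[i j]|i].
have T4 : forall e f, Ed a f = Ed a e \/ Ed a f = ((Ed a e).2, (Ed a e).1) -> e = f.
  move=> [[i j]|i] [[i' j']|i'] /= [] /(congr1 (fun p => (@code l a p.1, @code l a p.2))) /=;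
  case=> *; apply/eqP; rewrite ?eq_inl ?eq_inr ?xpair_eqE -?val_eqE /=; addb; lia.
move=> /(_ T1 T2 T3 T4).
rewrite card_sum card_prod !card_ord card_isL; lia.
Qed.

Theorem mainTheorem12 (l : nat) (hl : 0 < l)
  (a : 'I_(l + 2)) (b : 'I_(l + 1) * 'I_2) :
  competition_number_is (G_l l a b) 1 /\ phylogeny_number_is (G_l l a b) l.
Proof.
split.
- split; first exact: comp_ok1.
  move=> k Hk; exact: (@comp_lb _ _ (inl b) (@G_nbr l a b) k Hk).
- split; first exact: phylo_okl.
  move=> k; exact: phylo_lbl hl k.
Qed.
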